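(* Let $x_1,\dots,x_{N+1}$ be i.i.d. uniform on $\mathbb S^{d-1}$ and $x_{i^*}$ the element of $\{x_1,\dots,x_N\}$ maximizing $x_i^\top x_{N+1}$. There is an absolute constant $c>0$ such that if $N\ge c\sqrt d\log d$, then $\mathbb E[x_{i^*}^\top x_{N+1}]\ge\frac{2}{(N+1)^2}$.
   Context: $\mathbb S^{d-1}$ is the unit sphere in $\mathbb R^d$; equivalently $i^*=\arg\min_{i\in[N]}\|x_i-x_{N+1}\|_2$. *)

(* Defs.v *)
From HB Require Import structures.
From mathcomp Require Import all_boot all_order all_algebra.
From mathcomp Require Import all_classical all_reals all_analysis.
Set Implicit Arguments. Unset Strict Implicit. Unset Printing Implicit Defensive.
Import Order.TTheory GRing.Theory Num.Theory.
Import numFieldNormedType.Exports.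
Local Open Scope classical_set_scope.
Local Open Scope ring_scope.

Section defs.
Variable R : realType.

(* Euclidean inner product on R^d, vectors represented as d.-tuple R
   (which carries the product = Borel sigma-algebra of R^d). *)
Definition dotp (d : nat) (x y : d.-tuple R) : R :=
  \sum_(j < d) tnth x j * tnth y j.

Definition sphere (d : nat) : set (d.-tuple R) := [set x | dotp x x = 1].

Definition orthogonal_mx (d : nat) (Q : 'M[R]_d) : Prop := Q *m Q^T = 1%:M.

Definition mxapp (d : nat) (Q : 'M[R]_d) (x : d.-tuple R) : d.-tuple R :=
  [tuple \sum_(j < d) Q i j * tnth x j | i < d].

(* X is uniformly distributed on the unit sphere S^{d-1}: its law is a
   probability measure carried by S^{d-1} and invariant under O(d), i.e.
   the normalized surface (Haar) measure of S^{d-1}. *)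
Definition uniform_on_sphere (dT : measure_display) (T : measurableType dT)
  (P : probability T R) (d : nat) (X : T -> d.-tuple R) : Prop :=
  [/\ measurable_fun setT X,
      P (X @^-1` @sphere d) = 1%E &
      forall Q : 'M[R]_d, orthogonal_mx Q ->
      forall B : set (d.-tuple R), measurable B ->
        P (X @^-1` B) = P (X @^-1` (mxapp Q @^-1` B))].

Definition mutually_independent (dT : measure_display) (T : measurableType dT)
  (P : probability T R) (I : finType) (d : nat) (X : I -> T -> d.-tuple R) : Prop :=
  forall B : I -> set (d.-tuple R), (forall i, measurable (B i)) ->
    P (\bigcap_(i in [set: I]) (X i @^-1` B i)) = (\prod_(i : I) P (X i @^-1` B i))%E.

End defs.

(* Main.v *)
Require Import Defs.
From HB Require Import structures.
From mathcomp Require Import all_boot all_order all_algebra.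
From mathcomp Require Import all_classical all_reals all_analysis.
From mathcomp Require Import ring lra.
From mathcomp Require Import measurable_realfun.
From mathcomp Require Import perm.
Import Order.TTheory GRing.Theory Num.Theory.
Import numFieldNormedType.Exports.
Local Open Scope classical_set_scope.
Local Open Scope ring_scope.
Set Implicit Arguments. Unset Strict Implicit. Unset Printing Implicit Defensive.
Section bnd.
Context (R : realType) d (T : measurableType d).
Definition bmf (f : T -> R) := measurable_fun setT f /\ exists M : R, forall x, `|f x| <= M.

Lemma bmf_int' (mu : {measure set T -> \bar R}) f : (mu setT < +oo)%E -> bmf f ->
  mu.-integrable setT (EFin \o f).
Proof.
move=> muT [mf [M hM]]; apply: measurable_bounded_integrable => //.
rewrite /bounded_near; exists M; split; first by rewrite num_real.
move=> M' MM' x _ /=; apply: (le_trans (hM x)); exact: ltW.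
Qed.

Lemma bmf_int (mu : {finite_measure set T -> \bar R}) f : bmf f ->
  mu.-integrable setT (EFin \o f).
Proof. by apply: bmf_int'; exact: fin_num_fun_lty. Qed.

Definition Ex (mu : set T -> \bar R) (f : T -> R) : R := fine (\int[mu]_x (f x)%:E)%E.

Lemma ExE (mu : {finite_measure set T -> \bar R}) f : bmf f ->
  (\int[mu]_x (f x)%:E = (Ex mu f)%:E)%E.
Proof.
move=> bf; rewrite /Ex fineK//; apply: integrable_fin_num => //; exact: bmf_int.
Qed.

Lemma bmfD f g : bmf f -> bmf g -> bmf (fun x => f x + g x).
Proof.
move=> [mf [M hM]] [mg [M' hM']]; split; first exact: measurable_funD.
exists (M + M') => x; apply: (le_trans (ler_normD _ _)); exact: lerD.
Qed.

Lemma bmfM f g : bmf f -> bmf g -> bmf (fun x => f x * g x).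
Proof.
move=> [mf [M hM]] [mg [M' hM']]; split; first exact: measurable_funM.
exists (M * M') => x; rewrite normrM; apply: ler_pM => //; exact: hM.
Qed.

Lemma bmfC k : bmf (fun _ => k).
Proof. by split => //; exists `|k|. Qed.

Lemma bmf_sum (I : Type) (s : seq I) (F : I -> T -> R) :
  (forall i, bmf (F i)) -> bmf (fun x => \sum_(i <- s) F i x).
Proof.
move=> hF; elim: s => [|i s IH].
  by under eq_fun do rewrite big_nil; exact: bmfC.
under eq_fun do rewrite big_cons; exact: bmfD.
Qed.

Section Exlin.
Variable mu : {finite_measure set T -> \bar R}.
Lemma ExD f g : bmf f -> bmf g -> Ex mu (fun x => f x + g x) = Ex mu f + Ex mu g.
Proof.
move=> bf bg; rewrite /Ex.
under eq_integral do rewrite EFinD.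
rewrite integralD//; [|exact: bmf_int|exact: bmf_int].
rewrite (ExE mu bf) (ExE mu bg) //.
Qed.

Lemma ExZ k f : bmf f -> Ex mu (fun x => k * f x) = k * Ex mu f.
Proof.
move=> bf; rewrite /Ex.
under eq_integral do rewrite EFinM.
rewrite integralZl//; last exact: bmf_int.
by rewrite (ExE mu bf).
Qed.

Lemma Ex_sum (I : Type) (s : seq I) (F : I -> T -> R) :
  (forall i, bmf (F i)) -> Ex mu (fun x => \sum_(i <- s) F i x) = \sum_(i <- s) Ex mu (F i).
Proof.
move=> hF; elim: s => [|i s IH].
  under eq_fun do rewrite big_nil.
  by rewrite big_nil /Ex integral0.
under eq_fun do rewrite big_cons.
rewrite ExD//; last exact: bmf_sum.
by rewrite IH big_cons.
Qed.

Lemma Ex_cst k : mu setT = 1%E -> Ex mu (fun _ => k) = k.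
Proof. move=> h; rewrite /Ex integral_cst// /= h mule1 //. Qed.
End Exlin.
End bnd.
Section indep.
Context (R : realType) d (T : measurableType d) (P : probability T R).
Definition indep {d1 d2} {T1 : measurableType d1} {T2 : measurableType d2}
  (U : T -> T1) (V : T -> T2) := forall A B, measurable A -> measurable B ->
  P (U @^-1` A `&` V @^-1` B) = (P (U @^-1` A) * P (V @^-1` B))%E.

Lemma indep_prod {d1 d2} {T1 : measurableType d1} {T2 : measurableType d2}
  (U : T -> T1) (V : T -> T2) (mU : measurable_fun setT U) (mV : measurable_fun setT V) :
  indep U V -> forall (f : T1 -> R) (g : T2 -> R), bmf f -> bmf g ->
  Ex P (fun w => f (U w) * g (V w)) = Ex P (fun w => f (U w)) * Ex P (fun w => g (V w)).
Proof.
move=> H f g bf bg.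
have mW : measurable_fun setT (fun w => (U w, V w)) by exact: measurable_fun_pair.
pose U' : {mfun T >-> T1} := mfun_Sub (mem_set mU).
pose V' : {mfun T >-> T2} := mfun_Sub (mem_set mV).
pose W' : {mfun T >-> (T1 * T2)%type} := mfun_Sub (mem_set mW).
pose mu := distribution P U'.
pose nu := distribution P V'.
pose law := distribution P W'.
have hlaw : forall S, measurable S -> (mu \x nu)%E S = law S.
  apply: product_measure_unique => A B mA mB.
  rewrite /law /mu /nu /distribution /pushforward /=.
  exact: H.
have bfU : bmf (fun w => f (U w)).
  case: bf => mf [M hM]; split; first exact: measurableT_comp.
  by exists M.
have bgV : bmf (fun w => g (V w)).
  case: bg => mg [M hM]; split; first exact: measurableT_comp.
  by exists M.
have bfg : bmf (fun p : (T1 * T2)%type => f p.1 * g p.2).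
  case: bf => mf [M hM]; case: bg => mg [M' hM']; split.
    apply: measurable_funM; exact: measurableT_comp.
  exists (M * M') => x; rewrite normrM; apply: ler_pM => //; exact: hM.
have EU : Ex P (fun w => f (U w)) = Ex mu f.
  rewrite /Ex /mu integral_distribution//; first exact/measurable_EFinP/bf.1.
  exact: (bmf_int P bfU).
have EV : Ex P (fun w => g (V w)) = Ex nu g.
  rewrite /Ex /nu integral_distribution//; first exact/measurable_EFinP/bg.1.
  exact: (bmf_int P bgV).
have EW : Ex P (fun w => f (U w) * g (V w)) = Ex law (fun p => f p.1 * g p.2).
  rewrite /Ex /law integral_distribution//.
  apply/measurable_EFinP; apply: measurable_funM; apply: measurableT_comp => //; [exact: bf.1|exact: bg.1].
  have := bmf_int P (bmfM bfU bgV); apply: eq_integrable => //.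
rewrite EU EV EW.
have prodT : ((mu \x nu) setT < +oo)%E.
  have -> : (mu \x nu)%E setT = (mu setT * nu setT)%E by rewrite -setXTT product_measure1E.
  by rewrite /mu /nu !probability_setT mule1 ltry.
rewrite /Ex (eq_measure_integral (mu \x nu)%E); last first.
  by move=> A mA _; apply/esym/hlaw.
rewrite -integral12_prod_meas1; last exact: bmf_int'.
rewrite /fubini_F /=.
under eq_integral => a _.
  under eq_integral do rewrite EFinM.
  rewrite integralZl//; last exact: bmf_int.
  rewrite (ExE nu bg) -EFinM mulrC.
  over.
rewrite -/(Ex mu (fun a => Ex nu g * f a)) ExZ//.
by rewrite mulrC.
Qed.
End indep.
Section pfw.
Context d d' (T1 : measurableType d) (T2 : measurableType d') (R : realType)
  (m : {measure set T1 -> \bar R}) (f : {mfun T1 >-> T2}).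
Definition pfw := pushforward m f.
Let pfw0 : pfw set0 = 0%E.
Proof. by rewrite /pfw /pushforward preimage_set0 measure0. Qed.
Let pfw_ge0 A : (0 <= pfw A)%E.
Proof. exact: measure_ge0. Qed.
Let pfw_sa : semi_sigma_additive pfw.
Proof.
move=> F mF tF mUF; rewrite /pfw /pushforward preimage_bigcup.
apply: measure_semi_sigma_additive.
- by move=> n; rewrite -[X in measurable X]setTI; exact: measurable_funP.
- apply/trivIsetP => /= i j _ _ ij; rewrite -preimage_setI.
  by move/trivIsetP : tF => /(_ _ _ _ _ ij) ->//; rewrite preimage_set0.
- by rewrite -preimage_bigcup -[X in measurable X]setTI; exact: measurable_funP.
Qed.
HB.instance Definition _ := isMeasure.Build _ _ _ pfw pfw0 pfw_ge0 pfw_sa.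
End pfw.

Section indep2.
Context (R : realType) d (T : measurableType d) (P : probability T R).

Lemma prob_fin (A : set T) : measurable A -> P A \is a fin_num.
Proof.
move=> mA; rewrite ge0_fin_numE ?measure_ge0//.
exact: (le_lt_trans (probability_le1 P mA) (ltry _)).
Qed.

Lemma indep_pair {d1 d2 d3} {T1 : measurableType d1} {T2 : measurableType d2}
  {T3 : measurableType d3} (U1 : T -> T1) (U2 : T -> T2) (V : T -> T3)
  (mU1 : measurable_fun setT U1) (mU2 : measurable_fun setT U2) (mV : measurable_fun setT V) :
  (forall A B C, measurable A -> measurable B -> measurable C ->
   P (U1 @^-1` A `&` U2 @^-1` B `&` V @^-1` C) =
   (P (U1 @^-1` A `&` U2 @^-1` B) * P (V @^-1` C))%E) ->
  indep P (fun w => (U1 w, U2 w)) V.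
Proof.
move=> H S C mS mC.
have mW : measurable_fun setT (fun w => (U1 w, U2 w)) by exact: measurable_fun_pair.
pose W' : {mfun T >-> (T1 * T2)%type} := mfun_Sub (mem_set mW).
have mVC : measurable (V @^-1` C) by rewrite -[X in measurable X]setTI; exact: mV.
pose c := NngNum (fine_ge0 (measure_ge0 P (V @^-1` C))).
pose m1 := pfw (mrestr P mVC) W'.
pose m2 := mscale c (pfw P W').
pose G := [set A `*` B | A in @measurable _ T1 & B in @measurable _ T2].
have mG : @measurable _ (T1 * T2)%type = <<s G >> by exact: measurable_prod_measurableType.
have setIG : setI_closed G.
  move=> _ _ [X1 mX1 [X2 mX2 <-]] [Y1 mY1 [Y2 mY2 <-]].
  rewrite -setXI; exists (X1 `&` Y1); first exact: measurableI.
  by exists (X2 `&` Y2) => //; exact: measurableI.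
have Gg : forall i : nat, G setT.
  by move=> _; exists setT => //; exists setT => //; rewrite setXTT.
have gc : \bigcup_(k : nat) (setT : set (T1 * T2)%type) = setT.
  by rewrite bigcup_const.
have m12 : forall A, G A -> m1 A = m2 A.
  move=> _ [A mA [B mB <-]].
  rewrite /m1 /m2 /mscale /pfw /mrestr /pushforward /=.
  rewrite fineK; last exact: prob_fin.
  rewrite muleC; exact: H.
have m1oo : forall k : nat, (m1 setT < +oo)%E.
  move=> _; rewrite /m1 /pfw /mrestr /pushforward /=.
  apply: (le_lt_trans (probability_le1 P _) (ltry _)).
  by rewrite preimage_setT setTI.
have := @measure_unique _ R _ G (fun=> setT) mG setIG Gg gc m1 m2 m12 m1oo S mS.
rewrite /m1 /m2 /pfw /pushforward /= /mrestr /= /mscale /= fineK; last exact: prob_fin.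
by move=> ->; rewrite muleC.
Qed.
End indep2.
Section mutind.
Context (R : realType) dd (T : measurableType dd) (P : probability T R).
Context (n : nat) (Idx : finType) (X : Idx -> T -> n.-tuple R).
Hypothesis HX : mutually_independent P X.

Lemma mi_triple i j k : i != j -> i != k -> j != k ->
  forall A B C, measurable A -> measurable B -> measurable C ->
  P (X i @^-1` A `&` X j @^-1` B `&` X k @^-1` C) =
  (P (X i @^-1` A) * P (X j @^-1` B) * P (X k @^-1` C))%E.
Proof.
move=> ij ik jk A B C mA mB mC.
pose Bf l := if l == i then A else if l == j then B else if l == k then C else setT.
have mBf : forall l, measurable (Bf l).
  by move=> l; rewrite /Bf; case: ifP => // _; case: ifP => // _; case: ifP.
have := HX mBf.
have -> : \bigcap_(l in [set: Idx]) (X l @^-1` Bf l) =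
    X i @^-1` A `&` X j @^-1` B `&` X k @^-1` C.
  apply/seteqP; split => w.
    move=> h; have hi := h i I; have hj := h j I; have hk := h k I.
    move: hi hj hk; rewrite /Bf /= !eqxx (eq_sym j i) (negbTE ij).
    rewrite (eq_sym k i) (negbTE ik) (eq_sym k j) (negbTE jk).
    by move=> hi hj hk; split; first split.
  move=> [[a b] c] l _; rewrite /Bf /=.
  case: ifP => [/eqP -> //|_]; case: ifP => [/eqP -> //|_].
  by case: ifP => [/eqP -> //|_].
move=> ->.
rewrite (bigD1 i)//= (bigD1 j)/=; last by rewrite eq_sym.
rewrite (bigD1 k)/=; last by rewrite eq_sym ik eq_sym jk.
rewrite big1; last first.
  move=> l /andP[/andP[li lj] lk].
  by rewrite /Bf (negbTE li) (negbTE lj) (negbTE lk) preimage_setT probability_setT.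
rewrite /Bf eqxx (eq_sym j i) (negbTE ij) eqxx (eq_sym k i) (negbTE ik) (eq_sym k j) (negbTE jk) eqxx.
by rewrite mule1 muleA.
Qed.

Lemma mi_pair i j k : i != j -> i != k -> j != k ->
  forall A B, measurable A -> measurable B ->
  P (X i @^-1` A `&` X j @^-1` B) = (P (X i @^-1` A) * P (X j @^-1` B))%E.
Proof.
move=> ij ik jk A B mA mB.
have := mi_triple ij ik jk mA mB (measurableT).
by rewrite preimage_setT setIT probability_setT mule1.
Qed.
End mutind.
Section mats.
Context (R : realType) (n : nat).

Definition sgnQ (s : 'I_n -> R) : 'M[R]_n := \matrix_(i, j) (if i == j then s i else 0).

Lemma sgnQ_orth s : (forall i, s i * s i = 1) -> orthogonal_mx (sgnQ s).
Proof.
move=> hs; rewrite /orthogonal_mx; apply/matrixP => i j; rewrite !mxE.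
rewrite (bigD1 i)//= big1; last first.
  by move=> k ki; rewrite !mxE eq_sym (negbTE ki) mul0r.
rewrite !mxE eqxx addr0; case: (eqVneq i j) => [->|ij].
  by rewrite hs.
by rewrite mulr0.
Qed.

Lemma mxapp_sgnQ s (x : n.-tuple R) i : tnth (mxapp (sgnQ s) x) i = s i * tnth x i.
Proof.
rewrite tnth_mktuple (bigD1 i)//= big1; last first.
  by move=> k ki; rewrite !mxE eq_sym (negbTE ki) mul0r.
by rewrite !mxE eqxx addr0.
Qed.

Lemma perm_orth (p : 'S_n) : orthogonal_mx (perm_mx p : 'M[R]_n).
Proof. by rewrite /orthogonal_mx tr_perm_mx -perm_mxM fingroup.mulgV perm_mx1. Qed.

Lemma mxapp_perm (p : 'S_n) (x : n.-tuple R) i : tnth (mxapp (perm_mx p) x) i = tnth x (p i).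
Proof.
rewrite tnth_mktuple (bigD1 (p i))//= big1; last first.
  by move=> k ki; rewrite !mxE eq_sym (negbTE ki) mulr0n mul0r.
by rewrite !mxE eqxx mulr1n mul1r addr0.
Qed.

Lemma measurable_mxapp (Q : 'M[R]_n) : measurable_fun setT (mxapp Q).
Proof.
apply/measurable_fun_tnthP => i /=.
apply: (eq_measurable_fun (fun x => \sum_(j < n) Q i j * tnth x j)).
  by move=> x _ /=; rewrite tnth_mktuple.
apply: measurable_sum => j; apply: measurable_funM => //.
exact: measurable_tnth.
Qed.
End mats.

Section unif.
Context (R : realType) dd (T : measurableType dd) (P : probability T R).
Context (n : nat) (X : T -> n.-tuple R).
Hypothesis HX : uniform_on_sphere P X.

Lemma mX : measurable_fun setT X. Proof. by case: HX. Qed.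

Lemma Ex_inv (Q : 'M[R]_n) : orthogonal_mx Q -> forall F : n.-tuple R -> R, bmf F ->
  Ex P (fun w => F (X w)) = Ex P (fun w => F (mxapp Q (X w))).
Proof.
move=> oQ F bF.
have mQX : measurable_fun setT (mxapp Q \o X).
  apply: measurableT_comp; [exact: measurable_mxapp|exact: mX].
pose X' : {mfun T >-> n.-tuple R} := mfun_Sub (mem_set mX).
pose XQ' : {mfun T >-> n.-tuple R} := mfun_Sub (mem_set mQX).
have bFX : bmf (fun w => F (X w)).
  case: bF => mF [M hM]; split; [exact: measurableT_comp mF mX|by exists M].
have bFQX : bmf (fun w => F (mxapp Q (X w))).
  case: bF => mF [M hM]; split; [exact: measurableT_comp mF mQX|by exists M].
have E1 : Ex P (fun w => F (X w)) = Ex (distribution P X') F.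
  rewrite /Ex integral_distribution//; first by apply/measurable_EFinP; case: bF => + _; exact.
  have := bmf_int P bFX; apply: eq_integrable => //.
have E2 : Ex P (fun w => F (mxapp Q (X w))) = Ex (distribution P XQ') F.
  rewrite /Ex integral_distribution//; first by apply/measurable_EFinP; case: bF => + _; exact.
  have := bmf_int P bFQX; apply: eq_integrable => //.
rewrite E1 E2 /Ex (eq_measure_integral (distribution P XQ'))//.
move=> B mB _; case: HX => _ _ /(_ Q oQ B mB) h.
change (P (X @^-1` B) = P ((mxapp Q \o X) @^-1` B)); exact: h.
Qed.
End unif.
Section clipsec.
Context (R : realType).
Definition clip (t : R) := (`|t + 1| - `|t - 1|) / 2.

Lemma clip_spec t : [\/ t <= -1 /\ clip t = -1, 1 <= t /\ clip t = 1 |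
  (-1 <= t <= 1) /\ clip t = t].
Proof.
rewrite /clip; have [h1|h1] := lerP 0 (t + 1); have [h2|h2] := lerP 0 (t - 1);
  rewrite ?(ger0_norm h1) ?(ger0_norm h2) ?(ltr0_norm h1) ?(ltr0_norm h2).
- by apply: Or32; split; [lra|field].
- by apply: Or33; split; [apply/andP; split; lra|field].
- lra.
- by apply: Or31; split; [lra|field].
Qed.

Lemma clip_bnd t : `|clip t| <= 1.
Proof.
by rewrite ler_norml; case: (clip_spec t) => -[h ->]; apply/andP; split; lra.
Qed.

Lemma clip_id t : `|t| <= 1 -> clip t = t.
Proof.
rewrite ler_norml => /andP[h1 h2].
case: (clip_spec t) => -[h ->] //; lra.
Qed.

Lemma clipN t : clip (- t) = - clip t.
Proof.
case: (clip_spec t) => -[h ->]; case: (clip_spec (- t)) => -[h' ->]; lra.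
Qed.

Lemma measurable_clip : measurable_fun setT clip.
Proof.
rewrite /clip; apply: measurable_funM => //.
apply: measurable_funB; apply: measurableT_comp => //; apply: measurable_funD => //.
Qed.

Definition cc n (j : 'I_n) (x : n.-tuple R) := clip (tnth x j).

Lemma bmf_cc n (j : 'I_n) : bmf (cc j).
Proof.
split; last by exists 1 => x; exact: clip_bnd.
apply: measurableT_comp; [exact: measurable_clip|exact: measurable_tnth].
Qed.

Lemma measurable_dotp d' (T : measurableType d') n (f g : T -> n.-tuple R) :
  measurable_fun setT f -> measurable_fun setT g -> measurable_fun setT (fun w => dotp (f w) (g w)).
Proof.
move=> mf mg; rewrite /dotp; apply: measurable_sum => j; apply: measurable_funM.
  apply: (@measurableT_comp _ _ _ _ _ _ (fun x : n.-tuple R => tnth x j)) => //; exact: measurable_tnth.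
apply: (@measurableT_comp _ _ _ _ _ _ (fun x : n.-tuple R => tnth x j)) => //; exact: measurable_tnth.
Qed.

Lemma measurable_sphere n : measurable (@sphere R n).
Proof.
have := @measurable_dotp _ _ n id id (@measurable_id _ _ _) (@measurable_id _ _ _).
move=> /(_ measurableT [set 1]) h; rewrite -[X in measurable X]setTI; apply: h.
exact: measurable_set1.
Qed.

Lemma sphere_coord n (x : n.-tuple R) j : @sphere R n x -> `|tnth x j| <= 1.
Proof.
rewrite /sphere /dotp /= => h.
have : tnth x j * tnth x j <= 1.
  rewrite -h (bigD1 j)//= lerDl; apply: sumr_ge0 => k _; by rewrite -expr2 sqr_ge0.
move=> h1; rewrite -(@ler_pXn2r _ 2) ?nnegrE// ?expr1n.
  by rewrite real_normK ?num_real// expr2.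
Qed.
End clipsec.
Section moments.
Context (R : realType) dd (T : measurableType dd) (P : probability T R).
Context (n : nat) (X : T -> n.-tuple R).
Hypothesis HX : uniform_on_sphere P X.

Lemma mom1 j : Ex P (fun w => cc j (X w)) = 0.
Proof.
pose s := fun _ : 'I_n => -1 : R.
have oQ : orthogonal_mx (sgnQ s) by apply: sgnQ_orth => i; rewrite /s mulN1r opprK.
have := Ex_inv HX oQ (bmf_cc R j).
have -> : (fun w => cc j (mxapp (sgnQ s) (X w))) = (fun w => -1 * cc j (X w)).
  by apply/funext => w; rewrite /cc mxapp_sgnQ /s /= !mulN1r clipN.
rewrite ExZ; last first.
  have [mc [M hM]] := bmf_cc R j; split; first exact: measurableT_comp mc (mX HX).
  by exists M.
move=> h; rewrite /cc in h *; lra.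
Qed.

Lemma mom2off j k : j != k -> Ex P (fun w => cc j (X w) * cc k (X w)) = 0.
Proof.
move=> jk.
pose s := fun i : 'I_n => if i == j then -1 else 1 : R.
have oQ : orthogonal_mx (sgnQ s).
  by apply: sgnQ_orth => i; rewrite /s; case: ifP => _; rewrite ?mulN1r ?opprK ?mulr1.
have := Ex_inv HX oQ (bmfM (bmf_cc R j) (bmf_cc R k)).
have -> : (fun w => cc j (mxapp (sgnQ s) (X w)) * cc k (mxapp (sgnQ s) (X w))) =
    (fun w => -1 * (cc j (X w) * cc k (X w))).
  apply/funext => w; rewrite /cc !mxapp_sgnQ /s /= eqxx eq_sym (negbTE jk).
  by rewrite !mulN1r mul1r clipN mulNr.
rewrite ExZ; last first.
  have [mc [M hM]] := bmfM (bmf_cc R j) (bmf_cc R k); split; first exact: measurableT_comp mc (mX HX).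
  by exists M.
move=> h; rewrite /cc in h *; lra.
Qed.

Lemma mom2eq j k : Ex P (fun w => cc j (X w) ^+ 2) = Ex P (fun w => cc k (X w) ^+ 2).
Proof.
have oQ := perm_orth R (tperm j k).
have bF : bmf (fun x : n.-tuple R => cc j x ^+ 2).
  by rewrite /=; under eq_fun do rewrite expr2; exact: bmfM (bmf_cc R j) (bmf_cc R j).
rewrite (Ex_inv HX oQ bF); congr Ex; apply/funext => w.
by rewrite /cc mxapp_perm tpermL.
Qed.

Lemma mom2sum : \sum_(j < n) Ex P (fun w => cc j (X w) ^+ 2) = 1.
Proof.
have bF : forall j, bmf (fun w => cc j (X w) ^+ 2).
  move=> j; have [mc [M hM]] := bmf_cc R j; split.
    apply: measurable_funX; exact: measurableT_comp mc (mX HX).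
  by exists 1 => x; rewrite normrX; apply: exprn_ile1 => //; exact: clip_bnd.
rewrite -Ex_sum//.
rewrite -[RHS](@Ex_cst _ _ _ P 1 (probability_setT P)).
rewrite /Ex; congr fine.
have mS : measurable (X @^-1` @sphere R n).
  by rewrite -[X in measurable X]setTI; apply: (mX HX) => //; exact: measurable_sphere.
apply: ae_eq_integral => //.
- apply/measurable_EFinP; apply: measurable_sum => j; exact: (bF j).1.
- exists (~` (X @^-1` @sphere R n)); split.
  + exact: measurableC.
  + have h1 : P (X @^-1` @sphere R n) = 1%E by case: HX.
    have h := probability_setC P mS.
    rewrite h1 subee // in h; exact: h.
  + move=> w /= hw; apply: contrapT => hs; apply: hw => _.
    have hs' : @sphere R n (X w) by apply: contrapT.
    congr (_%:E); rewrite -hs' /dotp; apply: eq_bigr => j _.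
    by rewrite /cc clip_id ?expr2 //; exact: sphere_coord.
Qed.

Lemma mom2 j : Ex P (fun w => cc j (X w) ^+ 2) = n%:R^-1.
Proof.
have := mom2sum; under eq_bigr do rewrite (mom2eq _ j).
rewrite sumr_const card_ord => h.
have n0 : n%:R != 0 :> R.
  by rewrite pnatr_eq0 -lt0n; exact: (leq_ltn_trans (leq0n j) (ltn_ord j)).
by apply: (mulfI n0); rewrite mulfV // mulr_natl h.
Qed.
End moments.
Section helpers.
Context (R : realType).

Lemma dotp_bnd n (x y : n.-tuple R) : dotp x x = 1 -> dotp y y = 1 -> `|dotp x y| <= 1.
Proof.
move=> hx hy.
have e1 : \sum_(j < n) (tnth x j - tnth y j) ^+ 2 = dotp x x + dotp y y - 2 * dotp x y.
  rewrite /dotp mulr_sumr -!big_split -sumrN -big_split /=.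
  by apply: eq_bigr => j _; ring.
have e2 : \sum_(j < n) (tnth x j + tnth y j) ^+ 2 = dotp x x + dotp y y + 2 * dotp x y.
  rewrite /dotp mulr_sumr -!big_split /=.
  by apply: eq_bigr => j _; ring.
have p1 : 0 <= \sum_(j < n) (tnth x j - tnth y j) ^+ 2 by apply: sumr_ge0 => j _; exact: sqr_ge0.
have p2 : 0 <= \sum_(j < n) (tnth x j + tnth y j) ^+ 2 by apply: sumr_ge0 => j _; exact: sqr_ge0.
rewrite ler_norml; apply/andP; split; lra.
Qed.

Lemma max_quad (a b : R) : `|a| <= 1 -> `|b| <= 1 ->
  ((a + b) / 2 + (a - b) ^+ 2 / 4 <= a) || ((a + b) / 2 + (a - b) ^+ 2 / 4 <= b).
Proof.
rewrite !ler_norml => /andP[a1 a2] /andP[b1 b2].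
have [ab|ab] := lerP b a; apply/orP; [left|right]; nra.
Qed.

Lemma measurable_bigmaxe d (T : measurableType d) (I : Type) (s : seq I) (F : I -> T -> \bar R) :
  (forall i, measurable_fun setT (F i)) ->
  measurable_fun setT (fun w => \big[maxe/-oo%E]_(i <- s) F i w).
Proof.
move=> mF; elim: s => [|i s IH].
  by under eq_fun do rewrite big_nil; exact: measurable_cst.
under eq_fun do rewrite big_cons; exact: measurable_maxe.
Qed.

Lemma le_bigmaxe (I : eqType) (s : seq I) (F : I -> \bar R) i : i \in s ->
  (F i <= \big[maxe/-oo%E]_(j <- s) F j)%E.
Proof.
elim: s => [//|k s IH]; rewrite inE big_cons => /orP[/eqP->|/IH h].
  by rewrite le_max lexx.
by rewrite le_max h orbT.
Qed.

Lemma integral_mono d (T : measurableType d) (mu : {measure set T -> \bar R})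
  (f g : T -> \bar R) : measurable_fun setT f -> measurable_fun setT g ->
  (forall x, f x <= g x)%E -> (\int[mu]_x f x <= \int[mu]_x g x)%E.
Proof.
move=> mf mg fg; rewrite integralE [leRHS]integralE leeB//.
- apply: ge0_le_integral => //.
  + exact: measurable_funepos.
  + exact: measurable_funepos.
  + move=> x _; apply: (funepos_le (D := setT)); last by rewrite in_setT.
    by move=> y _; exact: fg.
- apply: ge0_le_integral => //.
  + exact: measurable_funeneg.
  + exact: measurable_funeneg.
  + move=> x _; apply: (funeneg_le (D := setT)); last by rewrite in_setT.
    by move=> y _; exact: fg.
Qed.
End helpers.
Lemma bmf_comp (R : realType) d1 d2 (T1 : measurableType d1) (T2 : measurableType d2)
  (F : T2 -> R) (U : T1 -> T2) : bmf F -> measurable_fun setT U -> bmf (fun w => F (U w)).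
Proof.
move=> [mF [M hM]] mU; split; first exact: measurableT_comp mF mU.
by exists M.
Qed.

Section main.
Context (R : realType) (dT : measure_display) (T : measurableType dT) (P : probability T R).
Context (n N : nat) (X : 'I_N.+1 -> T -> n.-tuple R).
Hypothesis HI : mutually_independent P X.
Hypothesis HU : forall i, uniform_on_sphere P (X i).
Hypothesis n0 : (0 < n)%N.
Hypothesis N2 : (2 <= N)%N.

Let o0 : 'I_N := Ordinal (leq_trans (isT : (1 <= 2)%N) N2).
Let o1 : 'I_N := Ordinal N2.
Let i0 := widen_ord (leqnSn N) o0.
Let i1 := widen_ord (leqnSn N) o1.
Let iY : 'I_N.+1 := ord_max.

Let i01 : i0 != i1. Proof. by rewrite -val_eqE. Qed.
Let i0Y : i0 != iY.
Proof. by rewrite -val_eqE /= eq_sym -lt0n (leq_trans _ N2). Qed.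
Let i1Y : i1 != iY.
Proof. by rewrite -val_eqE /= neq_ltn N2. Qed.

Let mXi i : measurable_fun setT (X i). Proof. exact: mX (HU i). Qed.

Let Y := X iY.
Let Zc (U : T -> n.-tuple R) w := \sum_(j < n) cc j (U w) * cc j (Y w).

Let bccX i j : bmf (fun w => cc j (X i w)).
Proof. exact: bmf_comp (bmf_cc R j) (mXi i). Qed.

Let bZ i : bmf (Zc (X i)).
Proof. by apply: bmf_sum => j; apply: bmfM; [exact: bccX|exact: bccX]. Qed.

Let indXY a k : a != iY -> a != k -> iY != k -> indep P (X a) Y.
Proof. move=> aY ak Yk A B mA mB; have h := mi_pair HI aY ak Yk mA mB; exact h. Qed.

Let EZ a k : a != iY -> a != k -> iY != k -> Ex P (Zc (X a)) = 0.
Proof.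
move=> aY ak Yk; rewrite /Zc Ex_sum; last by move=> j; apply: bmfM; exact: bccX.
apply: big1 => j _.
rewrite (indep_prod (mXi a) (mXi iY) (indXY aY ak Yk) (bmf_cc R j) (bmf_cc R j)).
by rewrite (mom1 (HU a)) mul0r.
Qed.

Let mom2m i j : Ex P (fun w => cc j (X i w) * cc j (X i w)) = n%:R^-1.
Proof.
rewrite -(mom2 (HU i) j); congr Ex; apply/funext => w; by rewrite expr2.
Qed.

Let bcc2 i j k : bmf (fun w => cc j (X i w) * cc k (X i w)).
Proof. by apply: bmfM; exact: bccX. Qed.

Let EZ2 a k : a != iY -> a != k -> iY != k -> Ex P (fun w => Zc (X a) w ^+ 2) = n%:R^-1.
Proof.
move=> aY ak Yk.
have -> : (fun w => Zc (X a) w ^+ 2) = (fun w => \sum_(j < n) \sum_(k0 < n)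
    (cc j (X a w) * cc k0 (X a w)) * (cc j (Y w) * cc k0 (Y w))).
  apply/funext => w; rewrite /Zc expr2 mulr_suml; apply: eq_bigr => j _.
  rewrite mulr_sumr; apply: eq_bigr => k0 _; ring.
rewrite Ex_sum; last first.
  by move=> j; apply: bmf_sum => k0; apply: bmfM; exact: bcc2.
under eq_bigr => j _.
  rewrite Ex_sum; last by move=> k0; apply: bmfM; exact: bcc2.
  under eq_bigr => k0 _.
    have bf : bmf (fun x : n.-tuple R => cc j x * cc k0 x) by apply: bmfM; exact: bmf_cc.
    rewrite (indep_prod (mXi a) (mXi iY) (indXY aY ak Yk) bf bf).
    over.
  rewrite (bigD1 j)//= big1; last first.
    by move=> k0 k0j; rewrite (mom2off (HU a)) ?mul0r// eq_sym.
  rewrite mom2m [Ex P (fun w => cc j (Y w) * cc j (Y w))]mom2m addr0.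
  over.
rewrite sumr_const card_ord -mulr_natr.
have n0' : n%:R != 0 :> R by rewrite pnatr_eq0 -lt0n.
by field.
Qed.

Let EZ01 : Ex P (fun w => Zc (X i0) w * Zc (X i1) w) = 0.
Proof.
have -> : (fun w => Zc (X i0) w * Zc (X i1) w) = (fun w => \sum_(j < n) \sum_(k0 < n)
    (cc j (X i0 w) * cc k0 (X i1 w)) * (cc j (Y w) * cc k0 (Y w))).
  apply/funext => w; rewrite /Zc mulr_suml; apply: eq_bigr => j _.
  rewrite mulr_sumr; apply: eq_bigr => k0 _; ring.
have bcc01 j k0 : bmf (fun w => cc j (X i0 w) * cc k0 (X i1 w)) by apply: bmfM; exact: bccX.
have bccY j k0 : bmf (fun w => cc j (Y w) * cc k0 (Y w)) by apply: bmfM; exact: bccX.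
rewrite Ex_sum; last first.
  by move=> j; apply: bmf_sum => k0; apply: bmfM.
apply: big1 => j _.
rewrite Ex_sum; last by move=> k0; apply: bmfM.
apply: big1 => k0 _.
have mU : measurable_fun setT (fun w => (X i0 w, X i1 w)) by exact: measurable_fun_pair.
have hind : indep P (fun w => (X i0 w, X i1 w)) Y.
  apply: (indep_pair (mXi i0) (mXi i1) (mXi iY)) => A B C mA mB mC.
  rewrite (mi_triple HI i01 i0Y i1Y mA mB mC) (mi_pair HI i01 i0Y i1Y mA mB).
  by [].
have bf : bmf (fun u : (n.-tuple R * n.-tuple R)%type => cc j u.1 * cc k0 u.2).
  split; last by exists 1 => u; rewrite normrM -[1]mulr1; apply: ler_pM => //; exact: clip_bnd.
  apply: measurable_funM.
    apply: measurableT_comp; [exact: (bmf_cc R j).1|exact: measurable_fst].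
  apply: measurableT_comp; [exact: (bmf_cc R k0).1|exact: measurable_snd].
have bg : bmf (fun x : n.-tuple R => cc j x * cc k0 x) by apply: bmfM; exact: bmf_cc.
have := indep_prod mU (mXi iY) hind bf bg; rewrite /= => ->.
have hind2 : indep P (X i0) (X i1).
  by move=> A B mA mB; have h := mi_pair HI i01 i0Y i1Y mA mB; exact h.
rewrite (indep_prod (mXi i0) (mXi i1) hind2 (bmf_cc R j) (bmf_cc R k0)).
by rewrite (mom1 (HU i0)) !mul0r.
Qed.

Let h w := (Zc (X i0) w + Zc (X i1) w) / 2 + (Zc (X i0) w - Zc (X i1) w) ^+ 2 / 4.

Let hE : h = (fun w => 2^-1 * Zc (X i0) w + (2^-1 * Zc (X i1) w +
  (4^-1 * Zc (X i0) w ^+ 2 + (4^-1 * Zc (X i1) w ^+ 2 +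
  (- (2 * 4^-1)) * (Zc (X i0) w * Zc (X i1) w))))).
Proof. by apply/funext => w; rewrite /h; ring. Qed.

Let bsq i : bmf (fun w => Zc (X i) w ^+ 2).
Proof.
have -> : (fun w => Zc (X i) w ^+ 2) = (fun w => Zc (X i) w * Zc (X i) w).
  by apply/funext => w; rewrite expr2.
by apply: bmfM; exact: bZ.
Qed.

Let b01 : bmf (fun w => Zc (X i0) w * Zc (X i1) w).
Proof. by apply: bmfM; exact: bZ. Qed.

Let Eh : Ex P h = (2 * n%:R)^-1.
Proof.
have b0 := bZ i0; have b1 := bZ i1; have b00 := bsq i0; have b11 := bsq i1.
rewrite hE.
rewrite !ExD.
1: rewrite !ExZ //.
rewrite (EZ i0Y i01 (contra_neq (fun e => esym e) i1Y)).
rewrite (EZ i1Y (contra_neq (fun e => esym e) i01) (contra_neq (fun e => esym e) i0Y)).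
rewrite (EZ2 i0Y i01 (contra_neq (fun e => esym e) i1Y)).
rewrite (EZ2 i1Y (contra_neq (fun e => esym e) i01) (contra_neq (fun e => esym e) i0Y)).
rewrite EZ01.
1: have n0' : n%:R != 0 :> R by rewrite pnatr_eq0 -lt0n.
1: by field.
all: by repeat first [exact: b0|exact: b1|exact: b00|exact: b11|exact: b01|
  apply: bmfD|(apply: bmfM; [exact: bmfC|])].
Qed.

Let M w := (\big[maxe/-oo%E]_(i < N)
   (dotp (X (widen_ord (leqnSn N) i) w) (X ord_max w))%:E)%E.

Let bh : bmf h.
Proof.
have b0 := bZ i0; have b1 := bZ i1; have b00 := bsq i0; have b11 := bsq i1.
rewrite hE; by repeat first [exact: b0|exact: b1|exact: b00|exact: b11|exact: b01|
  apply: bmfD|(apply: bmfM; [exact: bmfC|])].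
Qed.

Lemma main_bound : (((2 * n%:R)^-1)%:E <= \int[P]_w M w)%E.
Proof.
have mF : forall i : 'I_N, measurable_fun setT
    (fun w => (dotp (X (widen_ord (leqnSn N) i) w) (X ord_max w))%:E).
  by move=> i; apply/measurable_EFinP; apply: measurable_dotp; exact: mXi.
have mM : measurable_fun setT M by apply: measurable_bigmaxe.
have mh : measurable_fun setT (fun w => (h w)%:E) by apply/measurable_EFinP; exact: bh.1.
have hsph a : {ae P, forall w, @sphere R n (X a w)}.
  have mS : measurable (X a @^-1` @sphere R n).
    by rewrite -[X in measurable X]setTI; apply: (mXi a) => //; exact: measurable_sphere.
  exists (~` (X a @^-1` @sphere R n)); split.
  - exact: measurableC.
  - have h1 : P (X a @^-1` @sphere R n) = 1%E by case: (HU a).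
    have h2 := probability_setC P mS.
    rewrite h1 subee // in h2; exact: h2.
  - by move=> w.
have ae : ae_eq P setT M (fun w => maxe (M w) (h w)%:E).
  apply: (@filterS3 _ _ _ _ _ _ _ _ (hsph i0) (hsph i1) (hsph iY)) => w s0 s1 sY _.
  apply/esym/max_idPl.
  have eZ a : @sphere R n (X a w) -> Zc (X a) w = dotp (X a w) (Y w).
    move=> sa; rewrite /Zc /dotp; apply: eq_bigr => j _.
    by rewrite /cc !clip_id //; exact: sphere_coord.
  have := max_quad (dotp_bnd s0 sY) (dotp_bnd s1 sY).
  rewrite /h (eZ _ s0) (eZ _ s1).
  case/orP => hle.
    apply: le_trans (le_bigmaxe _ (mem_index_enum o0)); rewrite lee_fin; exact: hle.
  apply: le_trans (le_bigmaxe _ (mem_index_enum o1)); rewrite lee_fin; exact: hle.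
rewrite (ae_eq_integral (fun w => maxe (M w) (h w)%:E) M measurableT mM _ ae); last first.
  exact: measurable_maxe.
rewrite -Eh -(ExE P bh).
apply: integral_mono => //; first exact: measurable_maxe.
by move=> w; rewrite le_max lexx orbT.
Qed.

End main.

Unset Implicit Arguments.

Theorem lemma18 (R : realType) :
  exists c : R, 0 < c /\
  forall (d N : nat), (2 <= d)%N ->
  c * Num.sqrt d%:R * ln d%:R <= N%:R ->
  forall (dT : measure_display) (T : measurableType dT) (P : probability T R)
         (X : 'I_N.+1 -> T -> d.-tuple R),
    mutually_independent P X ->
    (forall i, uniform_on_sphere P (X i)) ->
    ((2 / (N.+1)%:R ^+ 2)%:E <=
      \int[P]_w (\big[maxe/-oo]_(i < N)
                   (dotp (X (widen_ord (leqnSn N) i) w) (X ord_max w))%:E))%E.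
Proof.
have ln2 : 0 < ln (2 : R) by apply: ln_gt0; lra.
exists (2 / ln 2); split; first by apply: divr_gt0.
move=> d N d2 hc dT T P X HI HU.
have d0 : (0 < d)%N by apply: leq_trans d2.
have dR : (2 : R) <= d%:R by move: d2; rewrite -(ler_nat R) => h; exact: h.
have lnd : ln 2 <= ln (d%:R : R) by rewrite ler_ln ?posrE //; lra.
have s0 : 0 <= Num.sqrt (d%:R : R) by exact: sqrtr_ge0.
have s2 : Num.sqrt (d%:R : R) ^+ 2 = d%:R by rewrite sqr_sqrtr // ler0n.
have q1 : 1 <= ln (d%:R : R) / ln 2 by rewrite ler_pdivlMr // mul1r.
have e : 2 / ln 2 * Num.sqrt (d%:R : R) * ln d%:R =
    2 * Num.sqrt d%:R * (ln d%:R / ln 2).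
  by field; rewrite gt_eqF.
have key : 2 * Num.sqrt (d%:R : R) <= N%:R.
  apply: le_trans hc; rewrite e; nra.
have N0 : (0 : R) <= N%:R by exact: ler0n.
have N4d : 4 * d%:R <= (N%:R : R) ^+ 2 by nra.
have N2 : (2 <= N)%N.
  rewrite leqNgt; apply/negP => hN.
  have : (N%:R : R) <= 1%:R by rewrite ler_nat -ltnS.
  nra.
apply: le_trans (main_bound HI HU d0 N2).
rewrite lee_fin.
have A0 : (0 : R) < (N.+1)%:R ^+ 2 by rewrite exprn_gt0 // ltr0n.
have B0 : (0 : R) < 2 * d%:R by rewrite mulr_gt0 // ltr0n.
rewrite ler_pdivrMr // mulrC ler_pdivlMr //.
rewrite -natr1; nra.
Qed.
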